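(* The two-dimensional subalgebras of ${\rm S}_2$ are exactly $\langle e_1,e_2\rangle$, $\langle e_1\pm e_3,e_2\rangle$ and $\langle e_1,\alpha e_2+e_3\rangle$ ($\alpha\in\mathbb{C}$). Up to automorphisms of ${\rm S}_2$, every two-dimensional subalgebra is equivalent to one of $\langle e_1,e_2\rangle$, $\langle e_1+e_3,e_2\rangle$, $\langle e_1-e_3,e_2\rangle$, $\langle e_1,e_3\rangle$.
   Context: ${\rm S}_2$ is the complex algebra with basis $e_1,e_2,e_3$, unit $e_1$ ($e_1e_i=e_ie_1=e_i$), $e_2e_3=e_2$, $e_3e_2=-e_2$, $e_3e_3=e_1$; all other products of basis elements are zero. A subalgebra is a linear subspace closed under multiplication (it need not contain $e_1$). Equivalence up to automorphisms means one is mapped onto the other by an algebra automorphism. $\langle S\rangle$ denotes linear span. *)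

(* Defs.v *)
From HB Require Import structures.
From mathcomp Require Import all_boot all_order all_algebra.
From mathcomp Require Import complex.
From mathcomp Require Import reals.
Set Implicit Arguments. Unset Strict Implicit. Unset Printing Implicit Defensive.
Import GRing.Theory.
Local Open Scope ring_scope.

Section S2.
Variable R : realType.
Local Notation C := R[i].

Definition S2 := 'rV[C]_3.
Definition ebas (k : 'I_3) : S2 := delta_mx 0 k.
Definition e1 : S2 := ebas (@Ordinal 3 0 isT).
Definition e2 : S2 := ebas (@Ordinal 3 1 isT).
Definition e3 : S2 := ebas (@Ordinal 3 2 isT).

(* multiplication table of basis elements (indices 0,1,2 = e_1,e_2,e_3) *)
Definition emul (i j : 'I_3) : S2 :=
  match nat_of_ord i, nat_of_ord j with
  | 0, _ => ebas j
  | _, 0 => ebas i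
  | 1, 2 => e2
  | 2, 1 => - e2
  | 2, 2 => e1
  | _, _ => 0
  end.

Definition s2mul (u v : S2) : S2 :=
  \sum_(i < 3) \sum_(j < 3) (u 0 i * v 0 j) *: emul i j.

Definition is_subalgebra (U : {vspace S2}) : Prop :=
  forall u v, u \in U -> v \in U -> s2mul u v \in U.

Definition is_automorphism (f : 'End(S2)) : Prop :=
  bijective (fun x : S2 => f x) /\
  forall u v, f (s2mul u v) = s2mul (f u) (f v).
End S2.

(* Main.v *)
Require Import Defs.
From HB Require Import structures.
From mathcomp Require Import all_boot all_order all_algebra.
From mathcomp Require Import complex reals ring.
Import GRing.Theory.
Local Open Scope ring_scope.
Section A.

Variable R : realType.
Local Notation C := R[i].
Local Notation S := (S2 R).
Definition i0 : 'I_3 := @Ordinal 3 0 isT.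
Definition i1 : 'I_3 := @Ordinal 3 1 isT.
Definition i2 : 'I_3 := @Ordinal 3 2 isT.

Lemma ord3P (P : 'I_3 -> Prop) : P i0 -> P i1 -> P i2 -> forall i, P i.
Proof.
move=> H0 H1 H2 [[|[|[|n]]] Hn] //.
- by rewrite (_ : Ordinal Hn = i0) //; apply: val_inj.
- by rewrite (_ : Ordinal Hn = i1) //; apply: val_inj.
- by rewrite (_ : Ordinal Hn = i2) //; apply: val_inj.
Qed.

Lemma vecP (x y : S) : x 0 i0 = y 0 i0 -> x 0 i1 = y 0 i1 -> x 0 i2 = y 0 i2 -> x = y.
Proof.
move=> H0 H1 H2; apply/rowP; apply: ord3P; by [].
Qed.

Lemma e1E j : e1 R 0 j = (j == i0)%:R. Proof. by rewrite /e1/ebas mxE. Qed.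
Lemma e2E j : e2 R 0 j = (j == i1)%:R. Proof. by rewrite /e2/ebas mxE. Qed.
Lemma e3E j : e3 R 0 j = (j == i2)%:R. Proof. by rewrite /e3/ebas mxE. Qed.

Lemma mulE (u v : S) j : s2mul u v 0 j =
  ((u 0 i0 * v 0 i0 + u 0 i2 * v 0 i2) *: e1 R
  + (u 0 i0 * v 0 i1 + u 0 i1 * v 0 i0 + u 0 i1 * v 0 i2 - u 0 i2 * v 0 i1) *: e2 R
  + (u 0 i0 * v 0 i2 + u 0 i2 * v 0 i0) *: e3 R) 0 j.
Proof.
rewrite /s2mul.
rewrite !big_ord_recl !big_ord0 /=.
have E0 : (ord0 : 'I_3) = i0 by apply: val_inj.
have E1 : (lift ord0 (@ord0 1) : 'I_3) = i1 by apply: val_inj.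
have E2 : (lift ord0 (lift ord0 (@ord0 0)) : 'I_3) = i2 by apply: val_inj.
rewrite E2 E1 E0 /emul /= /e1 /e2 /e3 /ebas.
move: j; apply: ord3P; rewrite !mxE /=; ring.
Qed.

Local Notation e1 := (e1 R).
Local Notation e2 := (e2 R).
Local Notation e3 := (e3 R).

Ltac vcomp := apply/rowP; apply: ord3P; rewrite !(mulE, mxE, e1E, e2E, e3E) /=; ring.

Lemma mulDZl (a : C) (x y v : S) : s2mul (a *: x + y) v = a *: s2mul x v + s2mul y v.
Proof. vcomp. Qed.
Lemma mulDZr (a : C) (x y v : S) : s2mul v (a *: x + y) = a *: s2mul v x + s2mul v y.
Proof. vcomp. Qed.

Lemma mulDl (x y v : S) : s2mul (x + y) v = s2mul x v + s2mul y v.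
Proof. vcomp. Qed.
Lemma mulDr (x y v : S) : s2mul v (x + y) = s2mul v x + s2mul v y.
Proof. vcomp. Qed.
Lemma mulZl (a : C) (x v : S) : s2mul (a *: x) v = a *: s2mul x v.
Proof. vcomp. Qed.
Lemma mulZr (a : C) (x v : S) : s2mul v (a *: x) = a *: s2mul v x.
Proof. vcomp. Qed.

Lemma mem_span2P (p q u : S) :
  u \in <<[:: p; q]>>%VS -> exists a b : C, u = a *: p + b *: q.
Proof.
rewrite span_cons span_seq1 => /memv_addP [x /vlineP [a ->] [y /vlineP [b ->] ->]].
by exists a, b.
Qed.

Lemma memL (p q : S) : p \in <<[:: p; q]>>%VS.
Proof. by apply: memv_span; rewrite inE eqxx. Qed.
Lemma memR (p q : S) : q \in <<[:: p; q]>>%VS.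
Proof. by apply: memv_span; rewrite !inE eqxx orbT. Qed.

Lemma sub_span2 (p q : S) :
  let U := <<[:: p; q]>>%VS in
  s2mul p p \in U -> s2mul p q \in U -> s2mul q p \in U -> s2mul q q \in U ->
  is_subalgebra U.
Proof.
move=> U Hpp Hpq Hqp Hqq u v /mem_span2P [a [b ->]] /mem_span2P [c [d ->]].
rewrite !(mulDl, mulDr, mulZl, mulZr).
by rewrite !(memvD, memvZ).
Qed.

Lemma free2 (p q : S) : q != 0 -> (forall k, p <> k *: q) -> free [:: p; q].
Proof.
move=> Hq Hk; rewrite free_cons seq1_free Hq andbT span_seq1.
by apply/vlineP => [[k]] /Hk.
Qed.

Lemma span2_eq (U : {vspace S}) (p q : S) :
  p \in U -> q \in U -> \dim U = 2%N -> \dim (span [:: p; q]) = 2%N -> U = <<[:: p; q]>>%VS.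
Proof.
move=> Hp Hq HU Hf.
have sub : (<<[:: p; q]>> <= U)%VS.
  by apply/span_subvP => x; rewrite !inE => /orP [] /eqP ->.
have := (dimv_leqif_eq sub).2; rewrite HU Hf /= => /esym/eqP ->.
by [].
Qed.

Ltac ent i := move/rowP/(_ i); rewrite !(mulE, mxE, e1E, e2E, e3E) /=.

Lemma e2_neq0 : e2 != 0.
Proof. by apply/eqP; ent i1; move/eqP; rewrite oner_eq0. Qed.
Lemma e1_neq0 : e1 != 0.
Proof. by apply/eqP; ent i0; move/eqP; rewrite oner_eq0. Qed.

Lemma F1 : is_subalgebra (span [:: e1; e2]) /\ \dim (span [:: e1; e2]) = 2%N.
Proof.
have Hf : free [:: e1; e2].
  apply: free2; first exact: e2_neq0.
  by move=> k; ent i0; rewrite mulr0 => /eqP; rewrite oner_eq0.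
split; last exact: (eqP Hf).
apply: sub_span2.
- by rewrite (_ : s2mul e1 e1 = e1); [exact: memL | vcomp].
- by rewrite (_ : s2mul e1 e2 = e2); [exact: memR | vcomp].
- by rewrite (_ : s2mul e2 e1 = e2); [exact: memR | vcomp].
- by rewrite (_ : s2mul e2 e2 = 0); [exact: mem0v | vcomp].
Qed.

Lemma F2 : is_subalgebra (span [:: e1 + e3; e2]) /\ \dim (span [:: e1 + e3; e2]) = 2%N.
Proof.
have Hf : free [:: e1 + e3; e2].
  apply: free2; first exact: e2_neq0.
  by move=> k; ent i0; rewrite mulr0 addr0 => /eqP; rewrite oner_eq0.
split; last exact: (eqP Hf).
apply: sub_span2.
- by rewrite (_ : s2mul _ _ = 2%:R *: (e1 + e3)); [apply: memvZ; exact: memL | vcomp].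
- by rewrite (_ : s2mul _ _ = 0); [exact: mem0v | vcomp].
- by rewrite (_ : s2mul _ _ = 2%:R *: e2); [apply: memvZ; exact: memR | vcomp].
- by rewrite (_ : s2mul e2 e2 = 0); [exact: mem0v | vcomp].
Qed.

Lemma F3 : is_subalgebra (span [:: e1 - e3; e2]) /\ \dim (span [:: e1 - e3; e2]) = 2%N.
Proof.
have Hf : free [:: e1 - e3; e2].
  apply: free2; first exact: e2_neq0.
  by move=> k; ent i0; rewrite mulr0 subr0 => /eqP; rewrite oner_eq0.
split; last exact: (eqP Hf).
apply: sub_span2.
- by rewrite (_ : s2mul _ _ = 2%:R *: (e1 - e3)); [apply: memvZ; exact: memL | vcomp].
- by rewrite (_ : s2mul _ _ = 2%:R *: e2); [apply: memvZ; exact: memR | vcomp].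
- by rewrite (_ : s2mul _ _ = 0); [exact: mem0v | vcomp].
- by rewrite (_ : s2mul e2 e2 = 0); [exact: mem0v | vcomp].
Qed.

Lemma F4 (a : C) : is_subalgebra (span [:: e1; a *: e2 + e3]) /\ \dim (span [:: e1; a *: e2 + e3]) = 2%N.
Proof.
have Hf : free [:: e1; a *: e2 + e3].
  apply: free2.
    by apply/eqP; ent i2; rewrite mulr0 add0r => /eqP; rewrite oner_eq0.
  by move=> k; ent i0; rewrite mulr0 addr0 mulr0 => /eqP; rewrite oner_eq0.
split; last exact: (eqP Hf).
apply: sub_span2.
- by rewrite (_ : s2mul e1 e1 = e1); [exact: memL | vcomp].
- by rewrite (_ : s2mul _ _ = a *: e2 + e3); [exact: memR | vcomp].
- by rewrite (_ : s2mul _ _ = a *: e2 + e3); [exact: memR | vcomp].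
- by rewrite (_ : s2mul _ _ = e1); [exact: memL | vcomp].
Qed.


Definition vec (a b c : C) : S := a *: e1 + b *: e2 + c *: e3.

Lemma vec_eta (x : S) : x = vec (x 0 i0) (x 0 i1) (x 0 i2).
Proof. rewrite /vec; vcomp. Qed.
Lemma e1v : e1 = vec 1 0 0. Proof. rewrite /vec; vcomp. Qed.
Lemma e2v : e2 = vec 0 1 0. Proof. rewrite /vec; vcomp. Qed.
Lemma e3v : e3 = vec 0 0 1. Proof. rewrite /vec; vcomp. Qed.
Lemma vec0 : 0 = vec 0 0 0 :> S. Proof. rewrite /vec; vcomp. Qed.
Lemma vecD (a b c a' b' c' : C) : vec a b c + vec a' b' c' = vec (a + a') (b + b') (c + c').
Proof. rewrite /vec; vcomp. Qed.
Lemma vecB (a b c a' b' c' : C) : vec a b c - vec a' b' c' = vec (a - a') (b - b') (c - c').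
Proof. rewrite /vec; vcomp. Qed.
Lemma vecZ (k a b c : C) : k *: vec a b c = vec (k * a) (k * b) (k * c).
Proof. rewrite /vec; vcomp. Qed.
Lemma v0 (a b c : C) : vec a b c 0 i0 = a.
Proof. by rewrite /vec !mxE /= !mulr0 mulr1 ?addr0 ?add0r. Qed.
Lemma v1 (a b c : C) : vec a b c 0 i1 = b.
Proof. by rewrite /vec !mxE /= !mulr0 mulr1 ?addr0 ?add0r. Qed.
Lemma v2 (a b c : C) : vec a b c 0 i2 = c.
Proof. by rewrite /vec !mxE /= !mulr0 mulr1 ?addr0 ?add0r. Qed.

Lemma mulE' (u v : S) j : s2mul u v 0 j =
  vec (u 0 i0 * v 0 i0 + u 0 i2 * v 0 i2)
      (u 0 i0 * v 0 i1 + u 0 i1 * v 0 i0 + u 0 i1 * v 0 i2 - u 0 i2 * v 0 i1)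
      (u 0 i0 * v 0 i2 + u 0 i2 * v 0 i0) 0 j.
Proof. exact: mulE. Qed.

Lemma mulv (a b c a' b' c' : C) : s2mul (vec a b c) (vec a' b' c') =
  vec (a * a' + c * c') (a * b' + b * a' + b * c' - c * b') (a * c' + c * a').
Proof.
apply/rowP; apply: ord3P; rewrite mulE' ?v0 ?v1 ?v2 ?v0 ?v1 ?v2 //.
Qed.

Lemma vec_inj (a b c a' b' c' : C) : vec a b c = vec a' b' c' -> [/\ a = a', b = b' & c = c'].
Proof.
move=> E; split.
- by move: E => /rowP /(_ i0); rewrite !v0.
- by move: E => /rowP /(_ i1); rewrite !v1.
- by move: E => /rowP /(_ i2); rewrite !v2.
Qed.
End A.

Arguments vec_eta {R}.
Arguments e1v {R}.
Arguments e2v {R}.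
Arguments e3v {R}.
Arguments vec0 {R}.
Arguments vecD {R}.
Arguments vecB {R}.
Arguments vecZ {R}.
Arguments mulv {R}.
Arguments vec_inj {R a b c a' b' c'}.
Arguments v0 {R}.
Arguments v1 {R}.
Arguments v2 {R}.
Arguments mulE' {R}.
Arguments e2_neq0 {R}.
Arguments e1_neq0 {R}.
Arguments span2_eq {R U p q}.
Arguments free2 {R}.
Arguments mem_span2P {R}.
Arguments memL {R}.
Arguments memR {R}.
Arguments sub_span2 {R}.
Arguments mulDl {R}.
Arguments mulDr {R}.
Arguments mulZl {R}.
Arguments mulZr {R}.
Section B.
Variable R : realType.
Local Notation C := R[i].
Local Notation S := (S2 R).
Local Notation e1 := (e1 R).
Local Notation e2 := (e2 R).
Local Notation e3 := (e3 R).
Local Notation vec := (@vec R).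

Lemma classify (U : {vspace S}) : is_subalgebra U -> \dim U = 2%N ->
  [\/ U = (span [:: e1; e2]),
       U = (span [:: e1 + e3; e2]),
       U = (span [:: e1 - e3; e2])
     | exists alpha : C, U = (span [:: e1; alpha *: e2 + e3])].
Proof.
move=> HS HU.
have d1 : \dim <[e2]>%VS = 1%N by rewrite dim_vline e2_neq0.
case He2: (e2 \in U).
- have : ~~ (U <= <[e2]>)%VS by apply/negP => /dimvS; rewrite HU d1.
  case/subvPn => x Hx Hxn.
  move: Hx Hxn; rewrite (vec_eta x); move: (x 0 i0) (x 0 i1) (x 0 i2) => a b c Hx Hxn.
  clear x.
  have Hy : vec a 0 c \in U.
    have : vec a b c - b *: e2 \in U by rewrite memvB // memvZ.
    by rewrite e2v vecZ vecB mulr0 mulr1 subrr !subr0.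
  have Hac : (a != 0) || (c != 0).
    rewrite -negb_and; apply/negP => /andP [/eqP a0 /eqP c0]; move/negP: Hxn; apply.
    apply/vlineP; exists b; by rewrite e2v vecZ a0 c0 mulr0 mulr1.
  have HUeq : U = span [:: vec a 0 c; e2].
    apply: span2_eq; [exact: Hy | exact: He2 | exact: HU | apply/eqP];
      apply: free2; first exact: e2_neq0.
    move=> k; rewrite e2v vecZ !mulr0 => /vec_inj [a0 _ c0].
    by move: Hac; rewrite a0 c0 eqxx.
  have := HS _ _ Hy Hy; rewrite {1}HUeq => /mem_span2P [k [m Hkm]].
  rewrite mulv e2v !vecZ vecD in Hkm; case: (vec_inj Hkm) => E0 _ E2; clear Hkm.
  rewrite !(mulr0, mul0r, addr0, add0r, mulr1) in E0 E2.
  have [c0|cn0] := eqVneq c 0.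
    move: Hac; rewrite c0 eqxx orbF => an0.
    have He1 : e1 \in U.
      have := memvZ (a^-1) Hy; rewrite vecZ mulVf // mulr0 c0 mulr0.
      by rewrite -e1v.
    by constructor 1; apply: span2_eq He1 He2 HU (F1 R).2.
  have Hk : k = a + a.
    apply/eqP; rewrite -subr_eq0; apply/eqP; apply: (mulIf cn0).
    by rewrite mul0r mulrBl -E2; ring.
  have Hca : (c - a) * (c + a) = 0.
    transitivity ((a * a + c * c) - (a + a) * a); first ring.
    by rewrite E0 Hk subrr.
  have an0 : a != 0.
    apply/eqP => a0; move: E0; rewrite a0 !mul0r add0r mulr0 => /eqP.
    by rewrite mulf_eq0 orbb (negPf cn0).
  move/eqP: Hca; rewrite mulf_eq0 => /orP [/eqP Hc | /eqP Hc].
    have Hc' : c = a by apply/eqP; rewrite -subr_eq0 Hc.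
    have He13 : e1 + e3 \in U.
      have := memvZ (a^-1) Hy; rewrite vecZ Hc' mulVf // mulr0.
      by rewrite e1v e3v vecD !addr0 !add0r.
    by constructor 2; apply: span2_eq He13 He2 HU (F2 R).2.
  have Hc' : c = - a by apply/eqP; rewrite -subr_eq0 opprK Hc.
  have He13 : e1 - e3 \in U.
    have := memvZ (a^-1) Hy; rewrite vecZ Hc' mulrN mulVf // mulr0.
    by rewrite e1v e3v vecB !subr0 !sub0r.
  by constructor 3; apply: span2_eq He13 He2 HU (F3 R).2.
- have Hcap : \dim (U :&: <[e2]>)%VS = 0%N.
    have := dimvS (capvSr U <[e2]>); rewrite d1 leq_eqVlt ltnS leqn0 => /orP [/eqP H1|/eqP //].
    have := (dimv_leqif_eq (capvSr U <[e2]>)).2; rewrite H1 d1 eqxx => /esym/eqP Hc.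
    have : e2 \in (U :&: <[e2]>)%VS by rewrite Hc memv_line.
    by rewrite memv_cap He2.
  have Hfull : (U + <[e2]>)%VS = fullv.
    have := dimv_sum_cap U <[e2]>; rewrite Hcap HU d1 addn0 => Hd.
    have := (dimv_leqif_eq (subvf (U + <[e2]>)%VS)).2.
    have D3 : dim S = 3%N := dim_matrix _ 1 3.
    by rewrite Hd dimvf D3 eqxx => /esym/eqP.
  have Hdec : forall x : S, exists t : C, x - t *: e2 \in U.
    move=> x; have : x \in (U + <[e2]>)%VS by rewrite Hfull memvf.
    by case/memv_addP => u Hu [w /vlineP [t ->] ->]; exists t; rewrite addrK.
  case: (Hdec e1) => t Ht.
  have Ht0 : t = 0.
    have [//|tn0] := eqVneq t 0; exfalso; move: He2 => /negbT/negP; apply.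
    have E : s2mul (e1 - t *: e2) (e1 - t *: e2) - (e1 - t *: e2) = (-t) *: e2.
      by rewrite e1v e2v !vecZ !vecB mulv vecB; f_equal; ring.
    have : (-t) *: e2 \in U by rewrite -E memvB // HS.
    move/(memvZ (- t)^-1); rewrite scalerA mulVf ?oppr_eq0 //.
    rewrite e2v vecZ mulr0 mulr1; exact: id.
  have He1 : e1 \in U by move: Ht; rewrite Ht0 scale0r subr0.
  case: (Hdec e3) => s Hs.
  constructor 4; exists (-s).
  apply: span2_eq He1 _ HU (F4 R (-s)).2.
  by rewrite scaleNr addrC.
Qed.

Definition Mt (al : C) : 'M[C]_3 := 1%:M - al *: delta_mx i2 i1.

Lemma faE (al a b c : C) : vec a b c *m Mt al = vec a (b - al * c) c.
Proof.
have E0 : (ord0 : 'I_3) = i0 by apply: val_inj.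
have E1 : (lift ord0 (@ord0 1) : 'I_3) = i1 by apply: val_inj.
have E2 : (lift ord0 (lift ord0 (@ord0 0)) : 'I_3) = i2 by apply: val_inj.
apply/rowP; apply: ord3P; rewrite !mxE !big_ord_recl big_ord0 /= E2 E1 E0 v0 v1 v2 /Mt !mxE /=; ring.
Qed.

Definition fa (al : C) : 'End(S) := linfun (mulmxr (Mt al) : {linear S -> S}).

Lemma faV (al : C) (x : S) : fa al x = x *m Mt al.
Proof. by rewrite lfunE. Qed.

Lemma fa_vec (al a b c : C) : fa al (vec a b c) = vec a (b - al * c) c.
Proof. by rewrite faV faE. Qed.

Lemma fa_auto (al : C) : is_automorphism (fa al).
Proof.
split.
  exists (fa (- al)) => x; rewrite (vec_eta x) !fa_vec; f_equal; ring.
move=> u v; rewrite (vec_eta u) (vec_eta v) !fa_vec !mulv fa_vec; f_equal; ring.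
Qed.

Lemma fa0 (x : S) : fa 0 x = x.
Proof. by rewrite (vec_eta x) fa_vec mul0r subr0. Qed.

Lemma fa0_img (U : {vspace S}) : (fa 0 @: U)%VS = U.
Proof.
apply/vspaceP => x; apply/idP/idP.
  by case/memv_imgP => y Hy ->; rewrite fa0.
by move=> Hx; rewrite -(fa0 x); apply: memv_img.
Qed.

Lemma fa_img (al : C) : (fa al @: span [:: e1; (al *: e2 + e3)%R])%VS = span [:: e1; e3].
Proof.
rewrite limg_span /=.
have -> : fa al e1 = e1 by rewrite e1v fa_vec mulr0 subr0.
have -> : fa al (al *: e2 + e3) = e3.
  by rewrite e2v e3v vecZ vecD fa_vec; f_equal; ring.
by [].
Qed.
End B.

Theorem mainTheorem17 (R : realType) :
  (forall U : {vspace S2 R},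
     (is_subalgebra U /\ \dim U = 2%N) <->
     [\/ U = (span [:: e1 R; e2 R]),
         U = (span [:: e1 R + e3 R; e2 R]),
         U = (span [:: e1 R - e3 R; e2 R])
       | exists alpha : R[i], U = (span [:: e1 R; alpha *: e2 R + e3 R])])
  /\
  (forall U : {vspace S2 R},
     is_subalgebra U -> \dim U = 2%N ->
     exists f : 'End(S2 R), is_automorphism f /\
       [\/ (f @: U)%VS = (span [:: e1 R; e2 R]),
           (f @: U)%VS = (span [:: e1 R + e3 R; e2 R]),
           (f @: U)%VS = (span [:: e1 R - e3 R; e2 R])
         | (f @: U)%VS = (span [:: e1 R; e3 R])]).
Proof.
split.
- move=> U; split.
  + by case=> HS HU; exact: (@classify R U HS HU).
  + case=> [->|->|->|[al ->]]; [exact: F1|exact: F2|exact: F3|exact: F4].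
- move=> U HS HU.
  case: (@classify R U HS HU) => [->|->|->|[al ->]].
  + by exists (@fa R 0); split; [exact: fa_auto | constructor 1; rewrite fa0_img].
  + by exists (@fa R 0); split; [exact: fa_auto | constructor 2; rewrite fa0_img].
  + by exists (@fa R 0); split; [exact: fa_auto | constructor 3; rewrite fa0_img].
  + by exists (@fa R al); split; [exact: fa_auto | constructor 4; rewrite fa_img].
Qed.
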